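(* Let $\Lambda_{TU}=\{(F(x),\Lambda_x,v(x))\}_{x\in X}$ and $\Gamma_{TU}=\{(G(x),\Gamma_x,v(x))\}_{x\in X}$ be continuous $(T,U)$-controlled $g$-fusion frames for $H$ with bounds $A_1,B_1$ and $A_2,B_2$ and frame operators $S_C$ and $S_{C'}$ respectively, and assume $S_C^{-1}$ and $S_{C'}^{-1}$ each commute with both $T$ and $U$. Let $\Delta_{TU}=\{(X(x),\Delta_x,v(x))\}_{x\in X}$ with $X(x)=S_C^{-1}F(x)$, $\Delta_x=\Lambda_xP_{F(x)}S_C^{-1}$, and $\Theta_{TU}=\{(Y(x),\Theta_x,v(x))\}_{x\in X}$ with $Y(x)=S_{C'}^{-1}G(x)$, $\Theta_x=\Gamma_xP_{G(x)}S_{C'}^{-1}$, be their canonical duals. If there is $D>0$ such that for every $f\in H$ $$\Big|\int_X v(x)^2\big(\langle\Lambda_xP_{F(x)}Uf,\Lambda_xP_{F(x)}Tf\rangle-\langle\Gamma_xP_{G(x)}Uf,\Gamma_xP_{G(x)}Tf\rangle\big)\,d\mu(x)\Big|\le D\|f\|^2,$$ then for every $f\in H$ $$\Big|\int_X v(x)^2\big(\langle\Delta_xP_{X(x)}Uf,\Delta_xP_{X(x)}Tf\rangle-\langle\Theta_xP_{Y(x)}Uf,\Theta_xP_{Y(x)}Tf\rangle\big)\,d\mu(x)\Big|\le\frac{D}{A_1A_2}\|f\|^2.$$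
   Context: $H$ is a separable complex Hilbert space, $\mathcal{B}(H)$ the bounded operators on $H$, $\mathcal{GB}^+(H)$ the positive bounded operators on $H$ with bounded inverse, $P_M$ the orthogonal projection onto a closed subspace $M$. Let $(X,\mu)$ be a measure space, $\{K_x\}_{x\in X}$ Hilbert spaces, $v:X\to\mathbb{R}^+$ measurable, $F,G$ maps from $X$ to closed subspaces of $H$ with $x\mapsto P_{F(x)}f$, $x\mapsto P_{G(x)}f$ weakly measurable for all $f$, $\Lambda_x\in\mathcal{B}(F(x),K_x)$, $\Gamma_x\in\mathcal{B}(G(x),K_x)$, and $T,U\in\mathcal{GB}^+(H)$. A family $\{(F(x),\Lambda_x,v(x))\}$ is a continuous $(T,U)$-controlled $g$-fusion frame for $H$ with bounds $0<A\le B<\infty$ if $A\|f\|^2\le\int_X v(x)^2\langle\Lambda_xP_{F(x)}Uf,\Lambda_xP_{F(x)}Tf\rangle d\mu(x)\le B\|f\|^2$ for all $f\in H$. Its frame operator $S_C\in\mathcal{B}(H)$ is given by $\langle S_Cf,g\rangle=\int_X v(x)^2\langle T^*P_{F(x)}\Lambda_x^*\Lambda_xP_{F(x)}Uf,g\rangle d\mu(x)$; it satisfies $AI_H\le S_C\le BI_H$. The canonical dual of such a frame (when $S_C^{-1}$ commutes with $T$ and $U$) is the family $\{(S_C^{-1}F(x),\Lambda_xP_{F(x)}S_C^{-1},v(x))\}_{x\in X}$, the operator being restricted to $S_C^{-1}F(x)$. *)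

(* Defs.v *)
From HB Require Import structures.
From mathcomp Require Import all_boot all_order all_algebra.
From mathcomp Require Import all_classical all_reals all_analysis.
From mathcomp Require Import complex.
Set Implicit Arguments.
Unset Strict Implicit.
Unset Printing Implicit Defensive.
Import Order.TTheory GRing.Theory Num.Theory.
Local Open Scope ring_scope.
Local Open Scope classical_set_scope.

Record preH (R : realType) := PreH {
  pcar :> lmodType R[i];
  pip : pcar -> pcar -> R[i];
  pip_linl : forall (a : R[i]) (x y z : pcar), pip (a *: x + y) z = a * pip x z + pip y z;
  pip_conj : forall x y : pcar, pip x y = Num.conj (pip y x);
  pip_ge0 : forall x : pcar, 0 <= pip x x;
  pip_eq0 : forall x : pcar, pip x x = 0 -> x = 0
}.
Arguments pip {R P} : rename.

Definition hnorm (R : realType) (H : preH R) (x : H) : R :=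
  Num.sqrt (complex.Re (pip x x)).

Definition hcauchy (R : realType) (H : preH R) (u : nat -> H) : Prop :=
  forall e : R, 0 < e -> exists N : nat,
    forall m n : nat, (N <= m)%N -> (N <= n)%N -> hnorm (u m - u n) < e.

Definition hconv (R : realType) (H : preH R) (u : nat -> H) (l : H) : Prop :=
  forall e : R, 0 < e -> exists N : nat, forall n : nat, (N <= n)%N -> hnorm (u n - l) < e.

Record hilbert (R : realType) := Hilbert {
  hpre :> preH R;
  hcomplete : forall u : nat -> hpre, hcauchy u -> exists l, hconv u l;
  hseparable : exists d : nat -> hpre,
      forall (f : hpre) (e : R), 0 < e -> exists n, hnorm (f - d n) < e
}.

Definition closed_subspace (R : realType) (H : preH R) (M : set H) : Prop :=
  [/\ M 0,
      (forall (a : R[i]) (x y : H), M x -> M y -> M (a *: x + y)) &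
      (forall (u : nat -> H) (l : H), (forall n, M (u n)) -> hconv u l -> M l)].

(* orthogonal projection P_M f : the unique p in M with f - p orthogonal to M
   (exists and is unique when M is a closed subspace of a Hilbert space) *)
Definition orth_proj (R : realType) (H : preH R) (M : set H) (f : H) : H :=
  xget (0 : H) [set p | M p /\ forall g, M g -> pip (f - p) g = 0].

Definition bounded_op (R : realType) (H1 H2 : preH R) (L : H1 -> H2) : Prop :=
  (forall (a : R[i]) (x y : H1), L (a *: x + y) = a *: L x + L y) /\
  exists M : R, forall x, hnorm (L x) <= M * hnorm x.

Definition GBplus (R : realType) (H : preH R) (T : H -> H) : Prop :=
  [/\ bounded_op T,
      (forall f, 0 <= pip (T f) f) &
      exists Ti : H -> H, [/\ bounded_op Ti, cancel T Ti & cancel Ti T]].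

Definition RtoC (R : realType) (r : R) : R[i] := Complex r 0.

Definition cintegrable (R : realType) d (X : measurableType d)
    (mu : {measure set X -> \bar R}) (g : X -> R[i]) : Prop :=
  mu.-integrable setT (fun x => (complex.Re (g x))%:E) /\
  mu.-integrable setT (fun x => (complex.Im (g x))%:E).

Definition cint (R : realType) d (X : measurableType d)
    (mu : {measure set X -> \bar R}) (g : X -> R[i]) : R[i] :=
  Complex (Rintegral mu setT (fun x => complex.Re (g x)))
          (Rintegral mu setT (fun x => complex.Im (g x))).

Definition gff_integrand (R : realType) (H : hilbert R) d (X : measurableType d)
    (K : X -> hilbert R) (F : X -> set H) (Lam : forall x, H -> K x)
    (v : X -> R) (T U : H -> H) (f g : H) (x : X) : R[i] :=
  RtoC (v x ^+ 2) * pip (Lam x (orth_proj (F x) (U f))) (Lam x (orth_proj (F x) (T g))).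

Definition gf_family (R : realType) (H : hilbert R) d (X : measurableType d)
    (K : X -> hilbert R) (F : X -> set H) (Lam : forall x, H -> K x)
    (v : X -> R) : Prop :=
  [/\ (forall x, closed_subspace (F x)),
      (forall x, bounded_op (Lam x)),
      measurable_fun setT v, (forall x, 0 < v x) &
      (forall f g : H,
          measurable_fun setT (fun x => complex.Re (pip (orth_proj (F x) f) g)) /\
          measurable_fun setT (fun x => complex.Im (pip (orth_proj (F x) f) g)))].

Definition cgf_frame (R : realType) (H : hilbert R) d (X : measurableType d)
    (mu : {measure set X -> \bar R})
    (K : X -> hilbert R) (F : X -> set H) (Lam : forall x, H -> K x)
    (v : X -> R) (T U : H -> H) (A B : R) : Prop :=
  [/\ gf_family F Lam v, GBplus T /\ GBplus U, 0 < A, A <= B &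
      forall f : H, cintegrable mu (gff_integrand F Lam v T U f f) /\
        RtoC (A * hnorm f ^+ 2) <= cint mu (gff_integrand F Lam v T U f f)
          <= RtoC (B * hnorm f ^+ 2)].

(* S is the frame operator: <S f, g> = int v^2 <T^* P Lam^* Lam P U f, g>
   = int v^2 <Lam P U f, Lam P T g>  (T = T^* as T is positive) *)
Definition is_frame_op (R : realType) (H : hilbert R) d (X : measurableType d)
    (mu : {measure set X -> \bar R})
    (K : X -> hilbert R) (F : X -> set H) (Lam : forall x, H -> K x)
    (v : X -> R) (T U : H -> H) (S : H -> H) : Prop :=
  forall f g : H, pip (S f) g = cint mu (gff_integrand F Lam v T U f g).

(* Main.v *)
Require Import Defs.
From HB Require Import structures.
From mathcomp Require Import all_boot all_order all_algebra.
From mathcomp Require Import all_classical all_reals all_analysis.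
From mathcomp Require Import complex.
From mathcomp Require Import ring lra.
Set Implicit Arguments.
Unset Strict Implicit.
Unset Printing Implicit Defensive.
Import Order.TTheory GRing.Theory Num.Theory.
Local Open Scope ring_scope.
Local Open Scope classical_set_scope.
Local Open Scope complex_scope.
Section IP.
Variables (R : realType) (H : preH R).
Local Notation C := R[i].
Implicit Types (x y z : H) (a : C).

Lemma JM (x y : C) : conjc (x * y) = conjc x * conjc y.
Proof. exact: rmorphM. Qed.
Lemma JD (x y : C) : conjc (x + y) = conjc x + conjc y.
Proof. exact: rmorphD. Qed.
Lemma JN (x : C) : conjc (- x) = - conjc x.
Proof. exact: rmorphN. Qed.
Lemma JB (x y : C) : conjc (x - y) = conjc x - conjc y.
Proof. exact: rmorphB. Qed.
Lemma J0 : conjc (0 : C) = 0.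
Proof. by rewrite /conjc /= oppr0. Qed.
Lemma JK (x : C) : conjc (conjc x) = x.
Proof. exact: conjcK. Qed.
Lemma JR (r : R) : conjc (r%:C) = r%:C.
Proof. exact: conjc_real. Qed.

Lemma pip0l y : pip (0 : H) y = 0.
Proof.
have := pip_linl 1 (0 : H) 0 y; rewrite scaler0 addr0 mul1r.
by move=> h; apply: (addrI (pip (0:H) y)); rewrite addr0 -h.
Qed.

Lemma pip_sym0 x y : pip x y = 0 -> pip y x = 0.
Proof. by move=> h; rewrite pip_conj h rmorph0. Qed.

Lemma pipDl x y z : pip (x + y) z = pip x z + pip y z.
Proof. by have := pip_linl 1 x y z; rewrite scale1r mul1r. Qed.

Lemma pipZl a x z : pip (a *: x) z = a * pip x z.
Proof. by have := pip_linl a x 0 z; rewrite addr0 pip0l addr0. Qed.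

Lemma pipNl x z : pip (- x) z = - pip x z.
Proof. by rewrite -scaleN1r pipZl mulN1r. Qed.

Lemma pipBl x y z : pip (x - y) z = pip x z - pip y z.
Proof. by rewrite pipDl pipNl. Qed.

Lemma pipDr x y z : pip z (x + y) = pip z x + pip z y.
Proof. by rewrite pip_conj pipDl rmorphD /= -!pip_conj. Qed.

Lemma pipZr a x z : pip z (a *: x) = conjc a * pip z x.
Proof. by rewrite pip_conj pipZl rmorphM /= -!pip_conj. Qed.

Lemma pip0r y : pip y (0 : H) = 0.
Proof. by rewrite pip_conj pip0l; rewrite rmorph0. Qed.

Lemma pipNr x z : pip z (- x) = - pip z x.
Proof. by rewrite -scaleN1r pipZr rmorphN1 mulN1r. Qed.

Lemma pipBr x y z : pip z (x - y) = pip z x - pip z y.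
Proof. by rewrite pipDr pipNr. Qed.

Definition NN x : R := complex.Re (pip x x).

Lemma pip_real x : pip x x = (NN x)%:C.
Proof.
have h := pip_ge0 x; have := ger0_Im h; rewrite /NN.
by case: (pip x x) => a b /= ->.
Qed.

Lemma NN_ge0 x : 0 <= NN x.
Proof. by have := pip_ge0 x; rewrite pip_real lecR. Qed.

Lemma NN_eq0 x : NN x = 0 -> x = 0.
Proof. by move=> h; apply: pip_eq0; rewrite pip_real h. Qed.

Lemma hnorm2 x : hnorm x ^+ 2 = NN x.
Proof. by rewrite /hnorm sqr_sqrtr // NN_ge0. Qed.

Lemma NN0 : NN 0 = 0.
Proof. by rewrite /NN pip0l. Qed.

Lemma conj_pip x y : conjc (pip x y) = pip y x.
Proof. by rewrite (pip_conj y x). Qed.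

Definition nc2 (c : C) : R := complex.Re c ^+ 2 + complex.Im c ^+ 2.

Lemma nc2E (c : C) : c * conjc c = (nc2 c)%:C.
Proof. by case: c => a b; rewrite /nc2 /=; simpc; rewrite [b * a]mulrC addNr !expr2. Qed.

Lemma nc2_ge0 c : 0 <= nc2 c.
Proof. by rewrite /nc2 addr_ge0 // sqr_ge0. Qed.

Lemma nc2_eq0 c : nc2 c = 0 -> c = 0.
Proof.
case: c => a b; rewrite /nc2 /= => h.
have ha : a = 0 by apply/eqP; rewrite -sqrf_eq0; apply/eqP; nra.
have hb : b = 0 by apply/eqP; rewrite -sqrf_eq0; apply/eqP; nra.
by rewrite ha hb.
Qed.

Lemma NNZ a x : NN (a *: x) = nc2 a * NN x.
Proof.
by apply: complexI; rewrite rmorphM /= -nc2E -!pip_real pipZl pipZr; ring.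
Qed.

Lemma NNN x : NN (- x) = NN x.
Proof. by rewrite /NN pipNl pipNr opprK. Qed.

Lemma pipD2 x y : pip (x + y) (x + y) = pip x x + pip x y + conjc (pip x y) + pip y y.
Proof. by rewrite !pipDl !pipDr conj_pip; ring. Qed.

Lemma pipB2 x y : pip (x - y) (x - y) = pip x x - pip x y - conjc (pip x y) + pip y y.
Proof. by rewrite !pipBl !pipBr conj_pip; ring. Qed.

Lemma Re_addJ (c : C) : complex.Re (c + conjc c) = 2 * complex.Re c.
Proof. by case: c => a b /=; ring. Qed.

Lemma NND x y : NN (x + y) = NN x + 2 * complex.Re (pip x y) + NN y.
Proof.
rewrite /NN pipD2 !raddfD /=.
have -> : complex.Re (conjc (pip x y)) = complex.Re (pip x y) by case: (pip x y).
ring.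
Qed.

Lemma NNB x y : NN (x - y) = NN x - 2 * complex.Re (pip x y) + NN y.
Proof. by rewrite NND NNN pipNr raddfN /=; ring. Qed.

Lemma parallelogram x y : NN (x + y) + NN (x - y) = 2 * NN x + 2 * NN y.
Proof. by rewrite NND NNB; ring. Qed.

Lemma cauchy_schwarz x y : nc2 (pip x y) <= NN x * NN y.
Proof.
have [y0|ny0] := eqVneq (NN y) 0.
  by rewrite (NN_eq0 y0) pip0r NN0 mulr0 /nc2 /= expr0n /= addr0.
have hy : 0 < NN y by rewrite lt0r ny0 NN_ge0.
set c := pip x y.
have := NN_ge0 ((NN y)%:C *: x - c *: y).
rewrite NNB !NNZ pipZl pipZr -/c [conjc c * c]mulrC nc2E -rmorphM /=.
have -> : nc2 (NN y)%:C = NN y ^+ 2 by rewrite /nc2 /= expr0n /= addr0.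
move=> h.
have : 0 <= NN y * (NN x * NN y - nc2 c) by nra.
by rewrite pmulr_rge0 // subr_ge0.
Qed.

Lemma nc2M (c d : C) : nc2 (c * d) = nc2 c * nc2 d.
Proof. by apply: complexI; rewrite rmorphM /= -!nc2E rmorphM /=; ring. Qed.

Lemma nc2R (r : R) : nc2 r%:C = r ^+ 2.
Proof. by rewrite /nc2 /= expr0n /= addr0. Qed.

Lemma nc2D (c d : C) : nc2 (c + d) <= 2 * nc2 c + 2 * nc2 d.
Proof.
case: c d => a b [a' b']; rewrite /nc2 /=.
have := sqr_ge0 (a - a'); have := sqr_ge0 (b - b'); nra.
Qed.

Lemma nc2J (c : C) : nc2 (conjc c) = nc2 c.
Proof. by case: c => a b; rewrite /nc2 /= sqrrN. Qed.

Lemma NN_step (u g : H) : 0 < NN g ->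
  NN (u - (pip u g / (NN g)%:C) *: g) = NN u - nc2 (pip u g) / NN g.
Proof.
move=> hg; set c := pip u g; set b := NN g.
have b0 : b != 0 by rewrite gt_eqF.
have binv : (b%:C)^-1 = (b^-1)%:C by rewrite fmorphV.
have ct : conjc (c / b%:C) * c = (nc2 c / b)%:C.
  by rewrite binv JM JR mulrC mulrA nc2E -rmorphM.
rewrite NNB NNZ pipZr ct nc2M binv nc2R /=.
by rewrite -/b; field.
Qed.
End IP.

Section Proj.
Variables (R : realType) (H : hilbert R).
Local Notation C := R[i].

Lemma inv_small (e : R) : 0 < e -> exists N : nat, forall n, (N <= n)%N -> (n.+1%:R : R)^-1 < e.
Proof.
move=> e0; have ei : 0 <= e^-1 by rewrite invr_ge0 ltW.
exists (Num.Def.archi_bound e^-1) => n hn.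
have h1 := archi_boundP ei.
have hpos : (0 : R) < n.+1%:R by rewrite ltr0n.
rewrite -(invrK e) ltf_pV2 ?posrE ?invr_gt0 //.
apply: (lt_le_trans h1); rewrite ler_nat; exact: leqW.
Qed.

Lemma inv_mono (N n : nat) : (N <= n)%N -> (n.+1%:R : R)^-1 <= (N.+1%:R)^-1.
Proof. by move=> h; rewrite lef_pV2 ?posrE ?ltr0n // ler_nat ltnS. Qed.

Lemma hconvP (u : nat -> H) l : hconv u l ->
  forall e : R, 0 < e -> exists N : nat, forall n, (N <= n)%N -> NN (u n - l) < e.
Proof.
move=> hc e e0; have se : 0 < Num.sqrt e by rewrite sqrtr_gt0.
have [N hN] := hc (Num.sqrt e) se.
by exists N => n /hN; rewrite /hnorm ltr_sqrt.
Qed.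

Lemma hcauchyP (u : nat -> H) :
  (forall e : R, 0 < e -> exists N : nat, forall m n, (N <= m)%N -> (N <= n)%N ->
       NN (u m - u n) < e) -> hcauchy u.
Proof.
move=> h e e0; have [N hN] := h (e ^+ 2) (exprn_gt0 _ e0).
exists N => m n hm hn; have := hN m n hm hn.
by rewrite /hnorm -ltr_sqrt ?exprn_gt0 // sqrtr_sqr gtr0_norm.
Qed.

Variables (M : set H) (hM : closed_subspace M).

Lemma cs0 : M 0. Proof. by case: hM. Qed.
Lemma csL a x y : M x -> M y -> M (a *: x + y). Proof. by case: hM => _ h _; apply: h. Qed.
Lemma csD x y : M x -> M y -> M (x + y).
Proof. by move=> hx hy; have := csL 1 hx hy; rewrite scale1r. Qed.
Lemma csZ a x : M x -> M (a *: x).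
Proof. by move=> hx; have := csL a hx cs0; rewrite addr0. Qed.
Lemma csN x : M x -> M (- x).
Proof. by move=> hx; rewrite -scaleN1r; apply: csZ. Qed.
Lemma csB x y : M x -> M y -> M (x - y).
Proof. by move=> hx hy; apply: csD => //; apply: csN. Qed.
Lemma csLim (u : nat -> H) l : (forall n, M (u n)) -> hconv u l -> M l.
Proof. by case: hM => _ _ h; apply: h. Qed.

Lemma real_eq0 (x : R) : 0 <= x -> (forall e, 0 < e -> x < e) -> x = 0.
Proof.
move=> x0 h; apply/eqP; rewrite eq_le x0 andbT leNgt; apply/negP => hx.
by have := h x hx; rewrite ltxx.
Qed.

Lemma proj_exists f : exists p, M p /\ forall g, M g -> pip (f - p) g = 0.
Proof.
pose E := [set r | exists m, M m /\ r = NN (f - m)].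
have E0 : E !=set0 by exists (NN (f - 0)), 0; split => //; exact: cs0.
have Elb : has_lbound E by exists 0 => r [m [_ ->]]; exact: NN_ge0.
have Einf : has_inf E by split.
pose d := inf E.
have dle m : M m -> d <= NN (f - m).
  by move=> hm; apply: (ge_inf Elb); exists m.
have sq : forall n : nat, exists m, M m /\ NN (f - m) < d + (n.+1%:R)^-1.
  move=> n; have hn : 0 < (n.+1%:R : R)^-1 by rewrite invr_gt0 ltr0n.
  have [e [m [hm ->]] he] := inf_adherent hn Einf.
  by exists m.
have [m hm] := choice sq.
have n2 : nc2 (2%:R : C) = 4.
  by rewrite /nc2 /=; ring.
have cb k n : NN (m k - m n) <= 2 * (k.+1%:R)^-1 + 2 * (n.+1%:R)^-1.
  have [hk1 hk2] := hm k; have [hn1 hn2] := hm n.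
  pose mid := (2%:R^-1 : C) *: (m k + m n).
  have hmid : M mid by apply: csZ; apply: csD.
  have := dle _ hmid.
  have eq1 : (f - m k) + (f - m n) = (2%:R : C) *: (f - mid).
    rewrite scalerBr scalerA mulfV ?pnatr_eq0 // scale1r scaler_nat mulr2n.
    by rewrite addrACA opprD.
  have eq2 : (f - m k) - (f - m n) = - (m k - m n).
    by rewrite opprB addrC addrA subrK opprB.
  have := parallelogram (f - m k) (f - m n).
  rewrite eq1 eq2 NNZ NNN n2.
  move: hk2 hn2; move: (k.+1%:R : R)^-1 (n.+1%:R : R)^-1 => ik in_ hk2 hn2.
  lra.
have hcau : hcauchy m.
  apply: hcauchyP => e e0.
  have e4 : 0 < e / 4 by rewrite divr_gt0.
  have [N hN] := inv_small e4.
  exists N => k n hk hn; apply: (le_lt_trans (cb k n)).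
  have := inv_mono hk; have := inv_mono hn; have := hN N (leqnn N).
  move: (k.+1%:R : R)^-1 (n.+1%:R : R)^-1 (N.+1%:R : R)^-1 => ik in_ iN; lra.
have [p hp] := hcomplete hcau.
have Mp : M p by apply: (csLim _ hp) => n; case: (hm n).
exists p; split => // g hg.
have [g0|ng0] := eqVneq (NN g) 0; first by rewrite (NN_eq0 g0) pip0r.
have gpos : 0 < NN g by rewrite lt0r ng0 NN_ge0.
set c := pip (f - p) g.
apply: nc2_eq0; apply: real_eq0; first exact: nc2_ge0.
move=> e e0.
set b := NN g.
pose q := e / (4 * b).
have q0 : 0 < q by rewrite divr_gt0 // mulr_gt0.
have bq : b * q = e / 4 by rewrite /q; field; rewrite gt_eqF.
have [N1 hN1] := inv_small q0.
have [N2 hN2] := hconvP hp q0.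
pose n := maxn N1 N2.
have [hmn1 hmn2] := hm n.
set cn := pip (f - m n) g.
have step : nc2 cn < b * (n.+1%:R)^-1.
  have hM' : M (m n + (cn / b%:C) *: g) by apply: csD => //; apply: csZ.
  have := dle _ hM'; rewrite opprD addrA NN_step // -/cn => hr.
  have hlt : nc2 cn / b < (n.+1%:R)^-1.
    by move: hmn2 hr; move: (n.+1%:R : R)^-1 (nc2 cn / b) => i r h1 h2; lra.
  have -> : nc2 cn = nc2 cn / b * b by rewrite divfK // gt_eqF.
  by rewrite mulrC ltr_pM2l.
have dec : c = cn + pip (m n - p) g by rewrite /c /cn -pipDl addrA subrK.
have cs := cauchy_schwarz (m n - p) g.
have h1 := hN1 n (leq_maxl _ _).
have h2 := hN2 n (leq_maxr _ _).
have h1' : b * (n.+1%:R)^-1 < b * q by rewrite ltr_pM2l.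
have h2' : NN (m n - p) * b < q * b by rewrite ltr_pM2r.
have := nc2D cn (pip (m n - p) g); rewrite -dec.
rewrite -/b in cs.
have bq' : q * b = e / 4 by rewrite mulrC.
move: step h1' h2' cs bq bq'; clear h1 h2.
move: (b / n.+1%:R) (b * q) (q * b) (NN (m n - p) * b) => s1 s2 s3 s4.
move=> *; lra.
Qed.

Local Notation P := (orth_proj M).

Lemma proj_spec f : M (P f) /\ forall g, M g -> pip (f - P f) g = 0.
Proof. by rewrite /orth_proj; apply: (xgetPex 0 (proj_exists f)). Qed.

Lemma proj_in f : M (P f). Proof. by case: (proj_spec f). Qed.
Lemma proj_orth f g : M g -> pip (f - P f) g = 0. Proof. by case: (proj_spec f) => _; apply. Qed.

Lemma proj_uniq f p : M p -> (forall g, M g -> pip (f - p) g = 0) -> P f = p.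
Proof.
move=> hp hor; apply/eqP; rewrite -subr_eq0; apply/eqP; apply: pip_eq0.
have hd : M (P f - p) by apply: csB => //; apply: proj_in.
have e : P f - p = (f - p) - (f - P f).
  by rewrite [in RHS]opprB [in RHS]addrC [in RHS]addrA subrK.
by rewrite {1}e pipBl hor // proj_orth // subr0.
Qed.

Lemma proj_lin a f g : P (a *: f + g) = a *: P f + P g.
Proof.
apply: proj_uniq; first by apply: csL; apply: proj_in.
move=> h hh.
have -> : a *: f + g - (a *: P f + P g) = a *: (f - P f) + (g - P g).
  by rewrite scalerBr opprD addrACA.
by rewrite pipDl pipZl !proj_orth // mulr0 addr0.
Qed.

Lemma proj_id f : M f -> P f = f.
Proof. by move=> hf; apply: proj_uniq => // g _; rewrite subrr pip0l. Qed.

Lemma perp_perp y : (forall q, (forall g, M g -> pip q g = 0) -> pip y q = 0) -> M y.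
Proof.
move=> h.
have hq : forall g, M g -> pip (y - P y) g = 0 by move=> g; apply: proj_orth.
have h1 := h _ hq.
have h2 : pip (P y) (y - P y) = 0.
  by apply: pip_sym0; rewrite proj_orth //; exact: proj_in.
have : pip (y - P y) (y - P y) = 0 by rewrite pipBl h1 h2 subrr.
move/pip_eq0/eqP; rewrite subr_eq0 => /eqP ->; exact: proj_in.
Qed.

End Proj.

Lemma pipC (R : realType) (H : preH R) (x y : H) : pip x y = conjc (pip y x).
Proof. exact: pip_conj. Qed.

Section Lin.
Variables (R : realType) (V W : lmodType R[i]) (L : V -> W).
Hypothesis hL : forall (a : R[i]) x y, L (a *: x + y) = a *: L x + L y.
Lemma lin0 : L 0 = 0.
Proof.
have := hL 1 0 0; rewrite scaler0 addr0 scale1r => h.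
by apply: (addrI (L 0)); rewrite addr0 -h.
Qed.
Lemma linD x y : L (x + y) = L x + L y.
Proof. by have := hL 1 x y; rewrite !scale1r. Qed.
Lemma linZ a x : L (a *: x) = a *: L x.
Proof. by have := hL a x 0; rewrite !addr0 lin0 addr0. Qed.
Lemma linN x : L (- x) = - L x.
Proof. by rewrite -scaleN1r linZ scaleN1r. Qed.
Lemma linB x y : L (x - y) = L x - L y.
Proof. by rewrite linD linN. Qed.
End Lin.

Section Polar.
Variables (R : realType) (V : lmodType R[i]) (b : V -> V -> R[i]).
Hypothesis bl : forall (a : R[i]) x y z, b (a *: x + y) z = a * b x z + b y z.
Hypothesis br : forall (a : R[i]) x y z, b z (a *: x + y) = conjc a * b z x + b z y.

Lemma b0l z : b 0 z = 0.
Proof.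
have := bl 1 0 0 z; rewrite scaler0 addr0 mul1r => h.
by apply: (addrI (b 0 z)); rewrite addr0 -h.
Qed.
Lemma b0r z : b z 0 = 0.
Proof.
have := br 1 0 0 z; rewrite scaler0 addr0 rmorph1 mul1r => h.
by apply: (addrI (b z 0)); rewrite addr0 -h.
Qed.
Lemma bDl x y z : b (x + y) z = b x z + b y z.
Proof. by have := bl 1 x y z; rewrite scale1r mul1r. Qed.
Lemma bZl a x z : b (a *: x) z = a * b x z.
Proof. by have := bl a x 0 z; rewrite addr0 b0l addr0. Qed.
Lemma bDr x y z : b z (x + y) = b z x + b z y.
Proof. by have := br 1 x y z; rewrite scale1r rmorph1 mul1r. Qed.
Lemma bZr a x z : b z (a *: x) = conjc a * b z x.
Proof. by have := br a x 0 z; rewrite addr0 b0r addr0. Qed.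

Lemma bexp2 (c : R[i]) f g :
  b (f + c *: g) (f + c *: g) = b f f + conjc c * b f g + c * b g f + c * conjc c * b g g.
Proof. rewrite !bDl !bDr !bZl !bZr; ring. Qed.

Definition polar f g : R[i] :=
  (b (f + 1 *: g) (f + 1 *: g) - b (f + (-1) *: g) (f + (-1) *: g)
   + 'i%C * b (f + 'i%C *: g) (f + 'i%C *: g) - 'i%C * b (f + (-'i%C) *: g) (f + (-'i%C) *: g)) / 4.

Lemma polarE f g : b f g = polar f g.
Proof.
rewrite /polar !bexp2.
have hi : 'i%C * 'i%C = -1 :> R[i] by rewrite -expr2 sqr_i.
have ci : conjc 'i%C = - 'i%C :> R[i] by apply/eqP; rewrite eq_complex /= oppr0 !eqxx.
rewrite !JN ci.
have c1 : conjc (1 : R[i]) = 1 by apply/eqP; rewrite eq_complex /= oppr0 !eqxx.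
rewrite c1.
by field: hi.
Qed.
End Polar.

Section CInt.
Variables (R : realType) (d : measure_display) (X : measurableType d)
  (mu : {measure set X -> \bar R}).
Local Notation C := R[i].
Implicit Types (h : X -> C).

Lemma ReM (c z : C) : complex.Re (c * z) = complex.Re c * complex.Re z - complex.Im c * complex.Im z.
Proof. by case: c z => a b [p q]. Qed.
Lemma ImM (c z : C) : complex.Im (c * z) = complex.Re c * complex.Im z + complex.Im c * complex.Re z.
Proof. by case: c z => a b [p q]. Qed.

Lemma intZ (r : R) (f : X -> R) : mu.-integrable setT (EFin \o f) ->
  mu.-integrable setT (EFin \o (fun x => r * f x)).
Proof.
move=> h; have := integrableZl measurableT r h.
suff -> : EFin \o (fun x => r * f x) = (fun x => r%:E * (EFin \o f) x)%E by [].
by apply: funext => x; rewrite /= EFinM.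
Qed.

Lemma cintegrableD h1 h2 : cintegrable mu h1 -> cintegrable mu h2 ->
  cintegrable mu (fun x => h1 x + h2 x).
Proof.
move=> [r1 i1] [r2 i2]; split.
- have -> : (fun x => (complex.Re (h1 x + h2 x))%:E) =
            ((fun x => (complex.Re (h1 x))%:E) \+ (fun x => (complex.Re (h2 x))%:E))%E.
    by apply: funext => x /=; rewrite raddfD.
  exact: integrableD.
- have -> : (fun x => (complex.Im (h1 x + h2 x))%:E) =
            ((fun x => (complex.Im (h1 x))%:E) \+ (fun x => (complex.Im (h2 x))%:E))%E.
    by apply: funext => x /=; rewrite raddfD.
  exact: integrableD.
Qed.

Lemma cintegrableZ (c : C) h : cintegrable mu h -> cintegrable mu (fun x => c * h x).
Proof.
move=> [r1 i1]; split.
- have -> : (fun x => (complex.Re (c * h x))%:E) =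
     (fun x => ((complex.Re c)%:E * (complex.Re (h x))%:E) - ((complex.Im c)%:E * (complex.Im (h x))%:E))%E.
    by apply: funext => x /=; rewrite ReM.
  by apply: integrableB => //; apply: integrableZl.
- have -> : (fun x => (complex.Im (c * h x))%:E) =
     ((fun x => ((complex.Re c)%:E * (complex.Im (h x))%:E)) \+ (fun x => (complex.Im c)%:E * (complex.Re (h x))%:E))%E.
    by apply: funext => x /=; rewrite ImM.
  by apply: integrableD => //; apply: integrableZl.
Qed.

Lemma cintD h1 h2 : cintegrable mu h1 -> cintegrable mu h2 ->
  cint mu (fun x => h1 x + h2 x) = cint mu h1 + cint mu h2.
Proof.
move=> [r1 i1] [r2 i2]; rewrite /cint.
have -> : (fun x => complex.Re (h1 x + h2 x)) = (fun x => complex.Re (h1 x) + complex.Re (h2 x)).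
  by apply: funext => x; rewrite raddfD.
have -> : (fun x => complex.Im (h1 x + h2 x)) = (fun x => complex.Im (h1 x) + complex.Im (h2 x)).
  by apply: funext => x; rewrite raddfD.
by rewrite !RintegralD.
Qed.

Lemma cintZ (c : C) h : cintegrable mu h -> cint mu (fun x => c * h x) = c * cint mu h.
Proof.
move=> [r1 i1]; rewrite /cint.
have -> : (fun x => complex.Re (c * h x)) =
   (fun x => complex.Re c * complex.Re (h x) - complex.Im c * complex.Im (h x)).
  by apply: funext => x; rewrite ReM.
have -> : (fun x => complex.Im (c * h x)) =
   (fun x => complex.Re c * complex.Im (h x) + complex.Im c * complex.Re (h x)).
  by apply: funext => x; rewrite ImM.
rewrite RintegralB //; try by apply: intZ.
rewrite RintegralD //; try by apply: intZ.
rewrite !RintegralZl //.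
by case: c => a b /=; simpc.
Qed.

Lemma cintB h1 h2 : cintegrable mu h1 -> cintegrable mu h2 ->
  cint mu (fun x => h1 x - h2 x) = cint mu h1 - cint mu h2.
Proof.
move=> c1 c2.
have -> : (fun x => h1 x - h2 x) = (fun x => h1 x + (-1) * h2 x).
  by apply: funext => x; rewrite mulN1r.
by rewrite cintD ?cintZ ?mulN1r //; apply: cintegrableZ.
Qed.

Lemma cintegrableB h1 h2 : cintegrable mu h1 -> cintegrable mu h2 ->
  cintegrable mu (fun x => h1 x - h2 x).
Proof.
move=> c1 c2.
have -> : (fun x => h1 x - h2 x) = (fun x => h1 x + (-1) * h2 x).
  by apply: funext => x; rewrite mulN1r.
by apply: cintegrableD => //; apply: cintegrableZ.
Qed.

End CInt.

Lemma herm_aux (R : realType) (z w p q : R[i]) : complex.Im p = 0 -> complex.Im q = 0 ->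
  complex.Im (p + conjc 1 * z + 1 * w + 1 * conjc 1 * q) = 0 ->
  complex.Im (p + conjc 'i%C * z + 'i%C * w + 'i%C * conjc 'i%C * q) = 0 -> w = conjc z.
Proof.
case: z w p q => a b [c e] [p1 p2] [q1 q2] /= -> ->.
move=> h1 h2; apply/eqP; rewrite eq_complex /=; apply/andP; split; apply/eqP; lra.
Qed.

Section Frame.
Variables (R : realType) (H : hilbert R) (d : measure_display) (X : measurableType d)
  (mu : {measure set X -> \bar R}) (K : X -> hilbert R) (v : X -> R) (T U : H -> H)
  (F : X -> set H) (Lam : forall x, H -> K x) (A B : R) (S Si : H -> H).
Hypotheses (fr : cgf_frame mu F Lam v T U A B) (fo : is_frame_op mu F Lam v T U S)
  (SK : cancel S Si) (SiK : cancel Si S)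
  (SiT : forall f, Si (T f) = T (Si f)) (SiU : forall f, Si (U f) = U (Si f)).
Local Notation C := R[i].
Local Notation J := (gff_integrand F Lam v T U).

Lemma fam : gf_family F Lam v. Proof. by case: fr. Qed.
Lemma Fcs x : closed_subspace (F x). Proof. by case: fam. Qed.
Lemma Lamlin x : forall (a : C) y z, Lam x (a *: y + z) = a *: Lam x y + Lam x z.
Proof. by case: fam => _ h _ _ _; case: (h x). Qed.
Lemma Tlin : forall (a : C) y z, T (a *: y + z) = a *: T y + T z.
Proof. by case: fr => _ [[[h _] _ _] _] _ _ _. Qed.
Lemma Ulin : forall (a : C) y z, U (a *: y + z) = a *: U y + U z.
Proof. by case: fr => _ [_ [[h _] _ _]] _ _ _. Qed.
Lemma Apos : 0 < A. Proof. by case: fr. Qed.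
Lemma diag f : cintegrable mu (J f f) /\
   RtoC (A * hnorm f ^+ 2) <= cint mu (J f f) <= RtoC (B * hnorm f ^+ 2).
Proof. by case: fr => _ _ _ _; apply. Qed.

Lemma J_linl x (a : C) f f' g : J (a *: f + f') g x = a * J f g x + J f' g x.
Proof.
rewrite /gff_integrand Ulin (proj_lin (Fcs x)) Lamlin pip_linl; ring.
Qed.

Lemma J_linr x (a : C) g g' f : J f (a *: g + g') x = conjc a * J f g x + J f g' x.
Proof.
rewrite /gff_integrand Tlin (proj_lin (Fcs x)) Lamlin pipDr pipZr; ring.
Qed.

Lemma Jint f g : cintegrable mu (J f g).
Proof.
have e : J f g = fun x => 4^-1 * (J (f + 1 *: g) (f + 1 *: g) x
    + (-1) * J (f + (-1) *: g) (f + (-1) *: g) x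
    + 'i%C * J (f + 'i%C *: g) (f + 'i%C *: g) x
    + (- 'i%C) * J (f + (- 'i%C) *: g) (f + (- 'i%C) *: g) x).
  apply: funext => x.
  rewrite (polarE (b := fun f g => J f g x) (J_linl x) (J_linr x) f g) /polar; ring.
rewrite e; apply: cintegrableZ.
have i1 := proj1 (diag (f + 1 *: g)); have i2 := proj1 (diag (f + (-1) *: g)).
have i3 := proj1 (diag (f + 'i%C *: g)); have i4 := proj1 (diag (f + (-'i%C) *: g)).
exact: (cintegrableD (cintegrableD (cintegrableD i1 (cintegrableZ (-1) i2))
   (cintegrableZ 'i%C i3)) (cintegrableZ (-'i%C) i4)).
Qed.

Lemma BSl (a : C) f f' g : pip (S (a *: f + f')) g = a * pip (S f) g + pip (S f') g.
Proof.
rewrite !fo.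
have -> : J (a *: f + f') g = fun x => a * J f g x + J f' g x.
  by apply: funext => x; rewrite J_linl.
by rewrite cintD ?cintZ //; try apply: cintegrableZ; apply: Jint.
Qed.

Lemma BSr (a : C) g g' f : pip (S f) (a *: g + g') = conjc a * pip (S f) g + pip (S f) g'.
Proof. by rewrite pipDr pipZr. Qed.

Lemma Slin (a : C) f f' : S (a *: f + f') = a *: S f + S f'.
Proof.
apply/eqP; rewrite -subr_eq0; apply/eqP; apply: pip_eq0.
by rewrite pipBl BSl pipDl pipZl subrr.
Qed.

Lemma Sreal f : complex.Im (pip (S f) f) = 0.
Proof.
have [_ /andP [h _]] := diag f; move: h; rewrite lecE => /andP [/eqP h _].
by rewrite fo h.
Qed.

Lemma Slow f : A * NN f <= complex.Re (pip (S f) f).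
Proof.
have [_ /andP [h _]] := diag f; move: h; rewrite lecE => /andP [_ h].
by rewrite fo -hnorm2.
Qed.

Lemma Sherm f g : pip (S g) f = conjc (pip (S f) g).
Proof.
pose b := fun f g => pip (S f) g.
have e1 := bexp2 (b := b) BSl BSr 1 f g.
have e2 := bexp2 (b := b) BSl BSr 'i%C f g.
have r1 := Sreal (f + 1 *: g); have r2 := Sreal (f + 'i%C *: g).
rewrite /b in e1 e2; rewrite e1 in r1; rewrite e2 in r2.
exact: herm_aux (Sreal f) (Sreal g) r1 r2.
Qed.

Lemma Sadj f g : pip (S f) g = pip f (S g).
Proof. by rewrite (pipC f (S g)) Sherm. Qed.

Lemma Silin (a : C) f g : Si (a *: f + g) = a *: Si f + Si g.
Proof. by apply: (can_inj SK); rewrite SiK Slin !SiK. Qed.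

Lemma Siadj f g : pip (Si f) g = pip f (Si g).
Proof. by rewrite -{1}(SiK g) -Sadj SiK. Qed.

Lemma Sipos f : A * NN (Si f) <= complex.Re (pip f (Si f)).
Proof. by have := Slow (Si f); rewrite SiK. Qed.

Lemma Sipos_real f : complex.Im (pip f (Si f)) = 0.
Proof. by have := Sreal (Si f); rewrite SiK. Qed.

Definition Xs x := Si @` F x.

Lemma Xs_cs x : closed_subspace (Xs x).
Proof.
have hF := Fcs x.
split.
- by exists 0; [exact: cs0 | exact: (lin0 Silin)].
- move=> a _ _ [p hp <-] [q hq <-]; exists (a *: p + q); first exact: csL.
  by rewrite Silin.
- move=> u l hu hl.
  have hSl : F x (S l).
    apply: (perp_perp hF) => q hq.
    rewrite Sadj.
    have hun : forall n, pip (u n) (S q) = 0.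
      move=> n; have [w hw <-] := hu n.
      by rewrite -Sadj SiK; apply: pip_sym0; apply: hq.
    have [q0|nq0] := eqVneq (NN (S q)) 0; first by rewrite (NN_eq0 q0) pip0r.
    have qpos : 0 < NN (S q) by rewrite lt0r nq0 NN_ge0.
    apply: nc2_eq0; apply: real_eq0; first exact: nc2_ge0.
    move=> e e0.
    have eq0 : 0 < e / NN (S q) by rewrite divr_gt0.
    have [N hN] := hconvP hl eq0.
    have := hN N (leqnn N).
    have -> : pip l (S q) = pip (l - u N) (S q) by rewrite pipBl hun subr0.
    have cs := cauchy_schwarz (l - u N) (S q).
    rewrite -NNN opprB => h.
    apply: (le_lt_trans cs).
    by rewrite -ltr_pdivlMr.
  by exists (S l) => //; rewrite SK.
Qed.

Lemma proj_dual x h :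
  orth_proj (F x) (Si (orth_proj (Xs x) h)) = orth_proj (F x) (Si h).
Proof.
have hF := Fcs x; have hX := Xs_cs x.
set p := orth_proj (Xs x) h.
have -> : h = p + (h - p) by rewrite addrC subrK.
rewrite (linD Silin) (linD (proj_lin hF)).
suff -> : orth_proj (F x) (Si (h - p)) = 0 by rewrite addr0.
apply: (proj_uniq hF); first exact: cs0.
move=> g hg; rewrite subr0 Siadj.
by apply: (proj_orth hX); exists g.
Qed.

Lemma dual_integrand f x :
  gff_integrand (fun x => Si @` F x) (fun x h => Lam x (orth_proj (F x) (Si h))) v T U f f x
  = J (Si f) (Si f) x.
Proof.
rewrite /gff_integrand.
have e1 := proj_dual x (U f); have e2 := proj_dual x (T f).
rewrite /Xs in e1 e2.
by rewrite e1 e2 SiU SiT.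
Qed.

End Frame.

Lemma conj_real0 (R : realType) (c : R[i]) : complex.Im c = 0 -> conjc c = c.
Proof. by case: c => a b /= ->; rewrite oppr0. Qed.

Lemma real_of_Im0 (R : realType) (c : R[i]) : complex.Im c = 0 -> c = (complex.Re c)%:C.
Proof. by case: c => a b /= ->. Qed.

Lemma normC_nc2 (R : realType) (c : R[i]) : `|c| = (Num.sqrt (nc2 c))%:C.
Proof. by rewrite normc_def. Qed.

Section Main.
Variables (R : realType) (H : hilbert R) (d : measure_display)
    (X : measurableType d) (mu : {measure set X -> \bar R})
    (K : X -> hilbert R) (v : X -> R) (T U : H -> H)
    (F G : X -> set H) (Lam : forall x, H -> K x) (Gam : forall x, H -> K x)
    (A1 B1 A2 B2 : R) (SC SC' SCi SC'i : H -> H).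
Hypotheses (fr1 : cgf_frame mu F Lam v T U A1 B1) (fr2 : cgf_frame mu G Gam v T U A2 B2)
  (fo1 : is_frame_op mu F Lam v T U SC) (fo2 : is_frame_op mu G Gam v T U SC')
  (SK : cancel SC SCi) (SiK : cancel SCi SC) (SK' : cancel SC' SC'i) (SiK' : cancel SC'i SC')
  (SiT : forall f, SCi (T f) = T (SCi f)) (SiU : forall f, SCi (U f) = U (SCi f))
  (SiT' : forall f, SC'i (T f) = T (SC'i f)) (SiU' : forall f, SC'i (U f) = U (SC'i f)).
Variables (D : R).
Hypotheses (D0 : 0 < D)
  (hD : forall f : H,
     `| cint mu (fun x => gff_integrand F Lam v T U f f x
                          - gff_integrand G Gam v T U f f x) |
       <= RtoC (D * hnorm f ^+ 2)).
Local Notation C := R[i].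

Definition E (x y : H) : C := pip (SC x) y - pip (SC' x) y.

Lemma El (a : C) x x' y : E (a *: x + x') y = a * E x y + E x' y.
Proof. by rewrite /E (BSl fr1 fo1) (BSl fr2 fo2); ring. Qed.

Lemma Er (a : C) y y' x : E x (a *: y + y') = conjc a * E x y + E x y'.
Proof. by rewrite /E !pipDr !pipZr; ring. Qed.

Lemma Eherm x y : E y x = conjc (E x y).
Proof. by rewrite /E (Sherm fr1 fo1) (Sherm fr2 fo2) JB. Qed.

Lemma Ereal g : complex.Im (E g g) = 0.
Proof. by rewrite /E raddfB /= (Sreal fr1 fo1) (Sreal fr2 fo2) subr0. Qed.

Lemma Ebound g : `|complex.Re (E g g)| <= D * NN g.
Proof.
have h := hD g.
rewrite cintB in h; last 2 first.
- exact: (proj1 (diag fr1 g)).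
- exact: (proj1 (diag fr2 g)).
rewrite -fo1 -fo2 -/(E g g) normC_nc2 /RtoC hnorm2 in h.
have : Num.sqrt (nc2 (E g g)) <= D * NN g by move: h; rewrite lecE /= => /andP [].
by rewrite /nc2 Ereal expr0n /= addr0 sqrtr_sqr.
Qed.

Lemma Si_bound (A B : R) (Fx : X -> set H) (L : forall x, H -> K x) (S Si : H -> H) f :
  cgf_frame mu Fx L v T U A B -> is_frame_op mu Fx L v T U S -> cancel S Si -> cancel Si S ->
  A ^+ 2 * NN (Si f) <= NN f.
Proof.
move=> fr fo sk sik.
have h1 := Sipos fr fo sik f.
have h2 := Sipos_real fr fo sik f.
have cs := cauchy_schwarz f (Si f).
have A0 := Apos fr.
rewrite /nc2 h2 expr0n /= addr0 in cs.
move: h1 cs; set r := complex.Re _ => h1 cs.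
have n0 := NN_ge0 (Si f); have nf := NN_ge0 f.
have [z|nz] := eqVneq (NN (Si f)) 0; first by rewrite z mulr0.
have npos : 0 < NN (Si f) by rewrite lt0r nz.
have : (A * NN (Si f)) ^+ 2 <= NN f * NN (Si f).
  apply: le_trans cs; rewrite ler_sqr ?nnegrE //; first by rewrite mulr_ge0 // ltW.
  by apply: le_trans h1; rewrite mulr_ge0 // ltW.
rewrite exprMn expr2 mulrA ler_pM2r //.
Qed.

Lemma key f : Num.sqrt (nc2 (E (SCi f) (SC'i f))) <= D / (A1 * A2) * NN f.
Proof.
set a := SCi f; set b := SC'i f; set z := E a b.
have A10 := Apos fr1; have A20 := Apos fr2.
have ha : A1 ^+ 2 * NN a <= NN f := Si_bound f fr1 fo1 SK SiK.
have hb : A2 ^+ 2 * NN b <= NN f := Si_bound f fr2 fo2 SK' SiK'.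
have nf := NN_ge0 f.
have rhs0 : 0 <= D / (A1 * A2) * NN f.
  by rewrite mulr_ge0 // divr_ge0 ?mulr_ge0 // ltW.
have [z0|nz] := eqVneq z 0.
  by rewrite z0 /nc2 /= expr0n /= addr0 sqrtr0.
set s := Num.sqrt (nc2 z).
have nc2pos : 0 < nc2 z.
  rewrite lt0r nc2_ge0 andbT; apply/eqP => h; move: nz; rewrite (nc2_eq0 h) eqxx //.
have s0 : 0 < s by rewrite sqrtr_gt0.
have ss : s ^+ 2 = nc2 z by rewrite sqr_sqrtr // ltW.
have sC : (s%:C : C) != 0.
  by apply/eqP => /(congr1 (@complex.Re R)) /= h; move: s0; rewrite h ltxx.
set c := conjc z / s%:C.
have cz : c * z = s%:C.
  rewrite /c mulrAC [conjc z * z]mulrC nc2E -ss expr2 rmorphM /= -mulrA divff // mulr1 //.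
have nc2c : nc2 c = 1.
  have si : (s%:C)^-1 = (s^-1)%:C by rewrite fmorphV.
  rewrite /c nc2M nc2J si nc2R -ss.
  by rewrite -exprMn mulfV ?expr1n // gt_eqF.
pose x := (A1%:C * c) *: a; pose y := (A2%:C : C) *: b.
have Exy : E x y = (A1 * A2 * s)%:C.
  rewrite /x /y (bZl El) (bZr Er) JR -/z.
  have -> : A1%:C * c * (A2%:C * z) = A1%:C * A2%:C * (c * z) by ring.
  by rewrite cz -!rmorphM.
have Eyx : E y x = (A1 * A2 * s)%:C by rewrite Eherm Exy JR.
have eP := bexp2 El Er 1 x y.
have eQ := bexp2 El Er (-1) x y.
have c1 : conjc (1 : C) = 1 by apply/eqP; rewrite eq_complex /= oppr0 !eqxx.
rewrite c1 Exy Eyx in eP; rewrite JN c1 Exy Eyx in eQ.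
rewrite scale1r in eP; rewrite scaleN1r in eQ.
have bP := Ebound (x + y); have bQ := Ebound (x - y).
have pl := parallelogram x y.
have nx : NN x = A1 ^+ 2 * NN a by rewrite /x NNZ nc2M nc2R nc2c mulr1.
have ny : NN y = A2 ^+ 2 * NN b by rewrite /y NNZ nc2R.
set w := (A1 * A2 * s)%:C.
have h : E (x + y) (x + y) - E (x - y) (x - y) = 4 * w by rewrite eP eQ; ring.
have := congr1 (@complex.Re R) h; rewrite raddfB /= => f1.
have bP' := le_trans (ler_norm _) bP.
have := ler_norm (- complex.Re (E (x - y) (x - y))); rewrite normrN => h0.
have bQ'' := le_trans h0 bQ.
have g1 : D * NN (x + y) + D * NN (x - y) = 2 * (D * (A1 ^+ 2 * NN a)) + 2 * (D * (A2 ^+ 2 * NN b)).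
  by rewrite -mulrDr pl nx ny; ring.
have g2 : D * (A1 ^+ 2 * NN a) <= D * NN f by rewrite ler_pM2l.
have g3 : D * (A2 ^+ 2 * NN b) <= D * NN f by rewrite ler_pM2l.
have A12 : 0 < A1 * A2 by rewrite mulr_gt0.
have -> : D / (A1 * A2) * NN f = (D * NN f) / (A1 * A2) by rewrite mulrAC.
rewrite ler_pdivlMr //.
move: f1 bP' bQ'' g1 g2 g3.
move: (complex.Re (E (x + y) (x + y))) (complex.Re (E (x - y) (x - y))) => p q.
move: (D * NN (x + y)) (D * NN (x - y)) (D * (A1 ^+ 2 * NN a)) (D * (A2 ^+ 2 * NN b)) (D * NN f).
move=> u1 u2 u3 u4 u5 *.
have : s * (A1 * A2) = A1 * A2 * s by ring.
lra.
Qed.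
End Main.

Unset Implicit Arguments.
Theorem theorem4p2 (R : realType) (H : hilbert R) (d : measure_display)
    (X : measurableType d) (mu : {measure set X -> \bar R})
    (K : X -> hilbert R) (v : X -> R) (T U : H -> H)
    (F G : X -> set H) (Lam : forall x, H -> K x) (Gam : forall x, H -> K x)
    (A1 B1 A2 B2 : R) (SC SC' SCi SC'i : H -> H) :
  cgf_frame mu F Lam v T U A1 B1 ->
  cgf_frame mu G Gam v T U A2 B2 ->
  is_frame_op mu F Lam v T U SC ->
  is_frame_op mu G Gam v T U SC' ->
  cancel SC SCi -> cancel SCi SC ->
  cancel SC' SC'i -> cancel SC'i SC' ->
  (forall f, SCi (T f) = T (SCi f)) -> (forall f, SCi (U f) = U (SCi f)) ->
  (forall f, SC'i (T f) = T (SC'i f)) -> (forall f, SC'i (U f) = U (SC'i f)) ->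
  forall D : R, 0 < D ->
  (forall f : H,
     `| cint mu (fun x => gff_integrand F Lam v T U f f x
                          - gff_integrand G Gam v T U f f x) |
       <= RtoC (D * hnorm f ^+ 2)) ->
  let Xs := fun x => SCi @` F x in
  let Delta := fun x (h : H) => Lam x (orth_proj (F x) (SCi h)) in
  let Ys := fun x => SC'i @` G x in
  let Theta := fun x (h : H) => Gam x (orth_proj (G x) (SC'i h)) in
  forall f : H,
    `| cint mu (fun x => gff_integrand Xs Delta v T U f f x
                         - gff_integrand Ys Theta v T U f f x) |
      <= RtoC (D / (A1 * A2) * hnorm f ^+ 2).
Proof.
move=> fr1 fr2 fo1 fo2 SK SiK SK' SiK' SiT SiU SiT' SiU' D D0 hD Xs Delta Ys Theta f.
have e : (fun x => gff_integrand Xs Delta v T U f f x - gff_integrand Ys Theta v T U f f x)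
    = (fun x => gff_integrand F Lam v T U (SCi f) (SCi f) x
               - gff_integrand G Gam v T U (SC'i f) (SC'i f) x).
  apply: funext => x.
  by rewrite /Xs /Delta /Ys /Theta (dual_integrand fr1 fo1 SK SiK SiT SiU)
    (dual_integrand fr2 fo2 SK' SiK' SiT' SiU').
rewrite e cintB; last 2 first.
- exact: (proj1 (diag fr1 _)).
- exact: (proj1 (diag fr2 _)).
rewrite -fo1 -fo2 SiK SiK'.
have r1 : pip f (SCi f) = pip (SC' (SCi f)) (SC'i f).
  rewrite (Sadj fr2 fo2) SiK' pipC conj_real0 //.
  have h := Sipos_real fr1 fo1 SiK f; rewrite pipC; move: h.
  by case: (pip f (SCi f)) => p q /= ->; rewrite oppr0.
have r2 : pip f (SC'i f) = pip (SC (SCi f)) (SC'i f) by rewrite SiK.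
rewrite r1 r2 -opprB normrN normC_nc2 /RtoC complexr0 lecR hnorm2.
exact: (key fr1 fr2 fo1 fo2 SK SiK SK' SiK' D0 hD f).
Qed.
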